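(* Let $\lambda\in[0,1]$. For every $\alpha$ with $1\le\alpha<\frac{\sqrt{\lambda^2-2\lambda+5}-\lambda+1}{2}$, there exists an instance with the weighted single metric loss with parameter $\lambda$ in which no clustering is in the $\alpha$-core.
   Context: Instance: finite nonempty set $\mathcal{N}$ of $n$ agents, finite nonempty set $\mathcal{M}$ of feasible centers, positive integer $k$, pseudometric $d$ on $\mathcal{N}\cup\mathcal{M}$. Weighted single metric loss: $\ell_i(C,x)=\lambda\max_{j\in C}d(i,j)+(1-\lambda)d(i,x)$ for $i\in C\subseteq\mathcal{N}$, $x\in\mathcal{M}$. A clustering is $\mathcal{X}=\{(C_1,x_1),\dots,(C_k,x_k)\}$ with $C_t$ pairwise disjoint (some possibly empty), union $\mathcal{N}$, $x_t\in\mathcal{M}$; $\ell_i(\mathcal{X})=\ell_i(C_t,x_t)$ where $i\in C_t$. For $\alpha\ge1$, $\mathcal{X}$ is in the $\alpha$-core if there is no $S\subseteq\mathcal{N}$ with $|S|\ge n/k$ and $y\in\mathcal{M}$ with $\alpha\,\ell_i(S,y)<\ell_i(\mathcal{X})$ for all $i\in S$. *)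

(* Defs.v *)
From HB Require Import structures.
From mathcomp Require Import all_boot all_order all_algebra.
From mathcomp Require Import Rstruct.
From Stdlib Require Import Rdefinitions.
Set Implicit Arguments. Unset Strict Implicit. Unset Printing Implicit Defensive.
Import Order.TTheory GRing.Theory Num.Theory.
Local Open Scope ring_scope.

(* Points are agents (inl) or feasible centers (inr). *)
Definition pt (N M : finType) := (N + M)%type.

Definition is_pseudometric (T : Type) (d : T -> T -> R) : Prop :=
  (forall x, d x x = 0) /\
  (forall x y, 0 <= d x y) /\
  (forall x y, d x y = d y x) /\
  (forall x y z, d x z <= d x y + d y z).

Record instance := Instance {
  agents : finType;
  centers : finType;
  kk : nat;
  dist : pt agents centers -> pt agents centers -> R;
  agents_nonempty : leq 1 #|agents|;
  centers_nonempty : leq 1 #|centers|;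
  k_pos : leq 1 kk;
  dist_pseudo : is_pseudometric dist }.

Definition wloss (I : instance) (lam : R) (C : {set agents I}) (x : centers I)
    (i : agents I) : R :=
  lam * (\big[Num.max/0]_(j in C) dist (inl i) (inl j))
  + (1 - lam) * dist (inl i) (inr x).

(* A clustering: each agent is assigned to one of k clusters (clusters may be
   empty), and each cluster t has a center ctr t. *)
Record clustering (I : instance) := Clustering {
  assign : agents I -> 'I_(kk I);
  ctr : 'I_(kk I) -> centers I }.

Definition cluster_of (I : instance) (X : clustering I) (t : 'I_(kk I))
  : {set agents I} := [set i | assign X i == t].

Definition loss_in (I : instance) (lam : R) (X : clustering I) (i : agents I) : R :=
  wloss lam (cluster_of X (assign X i)) (ctr X (assign X i)) i.

Definition in_core (I : instance) (lam alpha : R) (X : clustering I) : Prop :=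
  ~ exists (S : {set agents I}) (y : centers I),
      (#|S|%:R >= #|agents I|%:R / (kk I)%:R :> R) /\
      forall i, i \in S -> alpha * wloss lam S y i < loss_in lam X i.

(* Main.v *)
Require Import Defs.
From HB Require Import structures.
From mathcomp Require Import all_boot all_order all_algebra.
From mathcomp Require Import Rstruct.
From mathcomp Require Import lra.
From Stdlib Require Import Rdefinitions.
Import Order.TTheory GRing.Theory Num.Theory.
Local Open Scope ring_scope.

Definition A : finType := (bool * 'I_3)%type.

Definition code (n : nat) : nat * nat :=
  if n == 0%N then (1, 0)%N else if n == 1%N then (2, 1)%N else (4, 1)%N.

Definition PQ (u v : bool * 'I_3) : nat * nat :=
  match u.1, v.1 with
  | false, false | true, true => if nat_of_ord u.2 == nat_of_ord v.2 then (0, 0)%N else (3, 1)%N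
  | false, true => code (modn (subn (addn u.2 3) v.2) 3)
  | true, false => code (modn (subn (addn v.2 3) u.2) 3)
  end.

Definition kidx (x : pt A A) : bool * 'I_3 :=
  match x with inl a => (false, a.2) | inr c => (true, c.2) end.
Definition comp (x : pt A A) : bool :=
  match x with inl a => a.1 | inr c => c.1 end.

Definition dd (lam K : R) (x y : pt A A) :=
  if comp x == comp y then
    ((PQ (kidx x) (kidx y)).1)%:R + ((PQ (kidx x) (kidx y)).2)%:R * lam
  else K.

Lemma PQ_tri (u v w : bool * 'I_3) :
  leq (PQ u w).1 (addn (PQ u v).1 (PQ v w).1) /\ leq (PQ u w).2 (addn (PQ u v).2 (PQ v w).2).
Proof.
by case: u => [[] [[|[|[|?]]] ?]]; case: v => [[] [[|[|[|?]]] ?]];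
   case: w => [[] [[|[|[|?]]] ?]].
Qed.

Lemma PQ_bnd (u v : bool * 'I_3) : leq (PQ u v).1 4 /\ leq (PQ u v).2 1.
Proof. by case: u => [[] [[|[|[|?]]] ?]]; case: v => [[] [[|[|[|?]]] ?]]. Qed.

Lemma PQ_sym (u v : bool * 'I_3) : PQ u v = PQ v u.
Proof. by case: u => [[] [[|[|[|?]]] ?]]; case: v => [[] [[|[|[|?]]] ?]]. Qed.

Lemma PQ_refl (u : bool * 'I_3) : PQ u u = (0, 0)%N.
Proof. by case: u => [[] [[|[|[|?]]] ?]]. Qed.

Lemma dd_pseudo (lam K : R) : 0 <= lam <= 1 -> 5 <= K -> is_pseudometric (dd lam K).
Proof.
move=> /andP[l0 l1] K5.
have K0 : 0 <= K by lra.
have nn : forall x y, 0 <= dd lam K x y.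
  move=> x y; rewrite /dd; case: ifP => _ //.
  by apply: addr_ge0 => //; apply: mulr_ge0.
split; [|split; [|split]].
- by move=> x; rewrite /dd eqxx PQ_refl /= mul0r addr0.
- exact: nn.
- by move=> x y; rewrite /dd eq_sym PQ_sym.
- move=> x y z; rewrite /dd.
  have [P1 P2] := PQ_tri (kidx x) (kidx y) (kidx z).
  have [B1 B2] := PQ_bnd (kidx x) (kidx z).
  case: (comp x =P comp z) => [exz|nxz].
  + case: (comp x =P comp y) => [exy|nxy].
    * rewrite -exy -exz !eqxx.
      move: P1 P2; rewrite -!(ler_nat R) !natrD => P1 P2.
      have := ler_wpM2r l0 P2; rewrite mulrDl; lra.
    * try (have -> : (comp y == comp z) = false by apply/eqP => e; apply: nxy; rewrite exz e).
      try (have -> : (comp x == comp y) = false by apply/eqP).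
      move: B1 B2; rewrite -!(ler_nat R) => B1 B2.
      have := ler_wpM2r l0 B2; rewrite mul1r; lra.
  + try (have -> : (comp x == comp z) = false by apply/eqP).
    case: (comp x =P comp y) => [exy|nxy].
    * try (have -> : (comp y == comp z) = false by apply/eqP => e; apply: nxz; rewrite exy e).
      idtac.
      have : 0 <= ((PQ (kidx x) (kidx y)).1)%:R + ((PQ (kidx x) (kidx y)).2)%:R * lam :> R.
        by apply: addr_ge0 => //; apply: mulr_ge0.
      lra.
    * try (have -> : (comp x == comp y) = false by apply/eqP).
      have := nn y z; rewrite /dd; lra.
Qed.
Lemma alpha_bound (lam alpha : R) : 0 <= lam <= 1 -> 1 <= alpha ->
  alpha < (Num.sqrt (lam ^+ 2 - 2 * lam + 5) - lam + 1) / 2 ->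
  alpha * (1 + lam) < 2.
Proof.
move=> /andP[l0 l1] a1 h.
set D := lam ^+ 2 - 2 * lam + 5 in h.
have D0 : 0 <= D by rewrite /D; nra.
have sq := sqr_sqrtr D0.
have s0 := sqrtr_ge0 D.
move: sq s0 h; set s := Num.sqrt D => sq s0 h.
have hu : 2 * alpha + lam - 1 < s by lra.
have hu2 : (2 * alpha + lam - 1) ^+ 2 < s ^+ 2.
  rewrite -subr_gt0 subr_sqr; apply: mulr_gt0; lra.
rewrite sq /D in hu2.
have q : alpha ^+ 2 + alpha * (lam - 1) < 1 by nra.
nra.
Qed.

Section Gen.
Variable I : instance.

Lemma bigmax_ub (S : {set agents I}) (F : agents I -> R) (c : R) :
  0 <= c -> (forall j, j \in S -> F j <= c) -> \big[Num.max/0]_(j in S) F j <= c.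
Proof.
move=> c0 h; apply: (big_ind (fun x => x <= c)) => //.
  by move=> x y hx hy; rewrite ge_max hx hy.
Qed.

Lemma bigmax_ge0 (S : {set agents I}) (F : agents I -> R) :
  0 <= \big[Num.max/0]_(j in S) F j.
Proof. by elim/big_rec: _ => // i x _ hx; rewrite le_max hx orbT. Qed.

Lemma bigmax_lb (S : {set agents I}) (F : agents I -> R) j :
  j \in S -> F j <= \big[Num.max/0]_(j in S) F j.
Proof. by move=> hj; rewrite (bigD1 j) //= le_max lexx. Qed.

Lemma dsym (x y : pt (agents I) (centers I)) : dist x y = dist y x :> R.
Proof. by case: (dist_pseudo I) => _ [_ [h _]]; apply: h. Qed.
Lemma dnn (x y : pt (agents I) (centers I)) : 0 <= dist x y :> R.
Proof. by case: (dist_pseudo I) => _ [h _]; apply: h. Qed.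
Lemma drefl (x : pt (agents I) (centers I)) : dist x x = 0 :> R.
Proof. by case: (dist_pseudo I) => h _; apply: h. Qed.

Lemma loss_lb1 (lam : R) (X : clustering I) a : 0 <= lam ->
  (1 - lam) * dist (inl a) (inr (ctr X (assign X a))) <= loss_in lam X a.
Proof.
move=> l0; rewrite /loss_in /wloss lerDr; apply: mulr_ge0 => //; exact: bigmax_ge0.
Qed.

Lemma loss_lb2 (lam : R) (X : clustering I) a b : 0 <= lam ->
  assign X b = assign X a ->
  lam * dist (inl a) (inl b) + (1 - lam) * dist (inl a) (inr (ctr X (assign X a)))
  <= loss_in lam X a.
Proof.
move=> l0 e; rewrite /loss_in /wloss lerD2r; apply: ler_wpM2l => //.
apply: (@bigmax_lb (cluster_of X (assign X a)) (fun j => dist (inl a) (inl j)) b).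
by rewrite /cluster_of inE e.
Qed.

Lemma wloss_ub (lam : R) (a b : agents I) y : 0 <= lam ->
  wloss lam [set a; b] y a <= lam * dist (inl a) (inl b) + (1 - lam) * dist (inl a) (inr y).
Proof.
move=> l0; rewrite /wloss lerD2r; apply: ler_wpM2l => //.
apply: bigmax_ub; first exact: dnn.
by move=> j /set2P [->|->]; rewrite ?drefl ?dnn.
Qed.

Lemma block (lam alpha : R) (X : clustering I) (a b : agents I) y :
  0 <= lam -> 0 <= alpha -> a != b ->
  #|agents I|%:R / (kk I)%:R <= 2 :> R ->
  alpha * (lam * dist (inl a) (inl b) + (1 - lam) * dist (inl a) (inr y)) < loss_in lam X a ->
  alpha * (lam * dist (inl a) (inl b) + (1 - lam) * dist (inl b) (inr y)) < loss_in lam X b ->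
  ~ in_core lam alpha X.
Proof.
move=> l0 a0 ab hc ha hb; apply; exists [set a; b], y; split.
  by rewrite cards2 ab.
move=> i /set2P [->|->].
  apply: le_lt_trans ha; apply: ler_wpM2l => //; exact: wloss_ub.
apply: le_lt_trans hb; apply: ler_wpM2l => //.
by rewrite setUC dsym; apply: wloss_ub.
Qed.
End Gen.

Definition Kof (lam : R) := 5 / (1 - lam) + 5.

Lemma Kof_ge5 (lam : R) : 0 <= lam <= 1 -> 5 <= Kof lam.
Proof.
move=> /andP[_ l1]; rewrite /Kof; have : 0 <= 5 / (1 - lam) by apply: divr_ge0 => //; lra.
lra.
Qed.

Lemma Kof_mul (lam : R) : lam < 1 -> 5 <= (1 - lam) * Kof lam.
Proof.
move=> l1; rewrite /Kof mulrDr mulrC divfK; last by rewrite subr_eq0; apply/eqP => e; move: l1; rewrite -e ltxx.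
have : 0 <= (1 - lam) * 5 by apply: mulr_ge0; lra.
lra.
Qed.

Lemma cardA : leq 1 #|A|.
Proof. by rewrite card_prod card_bool card_ord. Qed.

Definition inst (lam : R) (hl : 0 <= lam <= 1) : instance :=
  @Instance A A 3 (dd lam (Kof lam)) cardA cardA isT (@dd_pseudo lam (Kof lam) hl (@Kof_ge5 lam hl)).

Notation o0 := (@Ordinal 3 0 isT).
Notation o1 := (@Ordinal 3 1 isT).
Notation o2 := (@Ordinal 3 2 isT).


Lemma ord3P (i : 'I_3) : i = o0 \/ i = o1 \/ i = o2.
Proof.
case: i => [[|[|[|i]]] Hi].
- by left; apply: val_inj.
- by right; left; apply: val_inj.
- by right; right; apply: val_inj.
- by [].
Qed.

Lemma dd_aa (lam K : R) c (i j : 'I_3) : i != j ->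
  dd lam K (inl (c, i)) (inl (c, j)) = 3 + lam.
Proof.
move=> ij; rewrite /dd /= eqxx /PQ /=.
have -> : (nat_of_ord i == nat_of_ord j) = false by apply/negbTE.
by rewrite mul1r.
Qed.

Theorem mainTheorem9 (lam alpha : R) :
  0 <= lam <= 1 ->
  1 <= alpha ->
  alpha < (Num.sqrt (lam ^+ 2 - 2 * lam + 5) - lam + 1) / 2 ->
  exists I : instance, forall X : clustering I, ~ in_core lam alpha X.
Proof.
move=> hl a1 ha.
have h2 := @alpha_bound lam alpha hl a1 ha.
have /andP[l0 l1'] := hl.
have l1 : lam < 1 by nra.
have a0 : 0 <= alpha by lra.
exists (inst lam hl) => X.
have hc : #|agents (inst lam hl)|%:R / (kk (inst lam hl))%:R <= 2 :> R.
  have -> : #|agents (inst lam hl)| = 6%N by rewrite /= card_prod card_bool card_ord.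
  rewrite /=; lra.
have [c U] : exists c : bool, forall t1 t2 : 'I_3,
    (ctr X t1).1 = c -> (ctr X t2).1 = c -> t1 = t2.
  case E0: (ctr X o0).1; case E1: (ctr X o1).1; case E2: (ctr X o2).1;
  first [ exists false; move=> t1 t2;
          case: (ord3P t1) => [->|[->|->]]; case: (ord3P t2) => [->|[->|->]];
          rewrite ?E0 ?E1 ?E2 //; done
        | exists true; move=> t1 t2;
          case: (ord3P t1) => [->|[->|->]]; case: (ord3P t2) => [->|[->|->]];
          rewrite ?E0 ?E1 ?E2 //; done ].
have LS : forall i : 'I_3, ((ctr X (assign X (c, i))).1 == c) = false ->
    5 <= loss_in lam X (c, i).
  move=> i e; apply: le_trans (@loss_lb1 (inst lam hl) lam X (c, i) l0).
  by rewrite /= /dd /= eq_sym e; apply: (@Kof_mul lam).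
have PB : forall (i j : 'I_3) (y : A), i != j ->
    ((ctr X (assign X (c, i))).1 == c) = false ->
    ((ctr X (assign X (c, j))).1 == c) = false ->
    alpha * (lam * (3 + lam) + (1 - lam) * dd lam (Kof lam) (inl (c, i)) (inr y)) < 5 ->
    alpha * (lam * (3 + lam) + (1 - lam) * dd lam (Kof lam) (inl (c, j)) (inr y)) < 5 ->
    ~ in_core lam alpha X.
  move=> i j y ij ei ej hi hj.
  apply: (@block (inst lam hl) lam alpha X (c, i) (c, j) y l0 a0 _ hc).
  - by rewrite xpair_eqE eqxx.
  - by rewrite /= dd_aa //; apply: lt_le_trans hi (LS i ei).
  - by rewrite /= dd_aa //; apply: lt_le_trans hj (LS j ej).
have GB : forall i1 i2 : 'I_3, i1 != i2 ->
    ((ctr X (assign X (c, i1))).1 == c) ->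
    ((ctr X (assign X (c, i2))).1 == c) -> ~ in_core lam alpha X.
  move=> i1 i2 i12 s1 s2.
  have AB : forall i, 5 <= loss_in lam X (c, i) \/
      lam * (3 + lam) + (1 - lam) * dd lam (Kof lam) (inl (c, i)) (inr (ctr X (assign X (c, i1))))
      <= loss_in lam X (c, i).
    move=> i; case si: ((ctr X (assign X (c, i))).1 == c); last by left; apply: LS.
    right.
    have eQ : assign X (c, i) = assign X (c, i1) by apply: U; apply/eqP.
    pose j := if i == i1 then i2 else i1.
    have ji : i != j.
      rewrite /j; case: (i =P i1) => [->|n] //; exact/eqP.
    have eQj : assign X (c, j) = assign X (c, i1).
      rewrite /j; case: ifP => _ //; apply: U; apply/eqP => //.
    have := @loss_lb2 (inst lam hl) lam X (c, i) (c, j) l0 (etrans eQj (esym eQ)).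
    by rewrite /= dd_aa // eQ.
  move: AB s1; case EQ: (ctr X (assign X (c, i1))) => [c' k] AB /= /eqP c'c.
  subst c'.
  have ab0 := AB o0; have ab1 := AB o1; have ab2 := AB o2.
  move: ab0 ab1 ab2; case: (ord3P k) => [->|[->|->]] ab0 ab1 ab2.
  - apply: (@block (inst lam hl) lam alpha X (c, o1) (c, o2) (c, o1) l0 a0 _ hc).
    + by rewrite xpair_eqE eqxx.
    + rewrite /= dd_aa //; move: ab1; rewrite /dd /= !eqxx /= => -[h|h]; nra.
    + rewrite /= dd_aa //; move: ab2; rewrite /dd /= !eqxx /= => -[h|h]; nra.
  - apply: (@block (inst lam hl) lam alpha X (c, o2) (c, o0) (c, o2) l0 a0 _ hc).
    + by rewrite xpair_eqE eqxx.
    + rewrite /= dd_aa //; move: ab2; rewrite /dd /= !eqxx /= => -[h|h]; nra.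
    + rewrite /= dd_aa //; move: ab0; rewrite /dd /= !eqxx /= => -[h|h]; nra.
  - apply: (@block (inst lam hl) lam alpha X (c, o0) (c, o1) (c, o0) l0 a0 _ hc).
    + by rewrite xpair_eqE eqxx.
    + rewrite /= dd_aa //; move: ab0; rewrite /dd /= !eqxx /= => -[h|h]; nra.
    + rewrite /= dd_aa //; move: ab1; rewrite /dd /= !eqxx /= => -[h|h]; nra.
case S0: ((ctr X (assign X (c, o0))).1 == c);
case S1: ((ctr X (assign X (c, o1))).1 == c);
case S2: ((ctr X (assign X (c, o2))).1 == c).
- exact: (GB o0 o1).
- exact: (GB o0 o1).
- exact: (GB o0 o2).
- apply: (PB o1 o2 (c, o1)) => //; rewrite /dd /= eqxx /=; nra.
- exact: (GB o1 o2).
- apply: (PB o2 o0 (c, o2)) => //; rewrite /dd /= eqxx /=; nra.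
- apply: (PB o0 o1 (c, o0)) => //; rewrite /dd /= eqxx /=; nra.
- apply: (PB o0 o1 (c, o0)) => //; rewrite /dd /= eqxx /=; nra.
Qed.
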